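(* Let $(A,\diamond,\circ,\lambda)$ be a left semi-truss such that $(A,\diamond)$ is an inverse semigroup, let $\sigma(a,b)=a\circ(b\diamond b^\diamond)$, and assume that $\lambda(a,b)=\sigma(a,b)^\diamond\diamond(a\circ b)$ for all $a,b\in A$. Then for all $a,b,c\in A$ and every idempotent $e\in E(A,\diamond)$: (1) $\sigma(a,e\diamond b)=\sigma(a,e)\diamond\sigma(a,b)^\diamond\diamond\sigma(a,b)$; (2) $\sigma(a,e\diamond b)=\sigma(a,b)\diamond\sigma(a,e)^\diamond\diamond\sigma(a,e)$; (3) $\sigma(a,b)\diamond\sigma(a,c)^\diamond$ and $\sigma(a,c)\diamond\sigma(a,b)^\diamond$ are idempotents of $(A,\diamond)$ and are equal to each other; (4) $\sigma(a,b)\sim_l\sigma(a,c)$; (5) $\sigma(a,b^\diamond)\diamond(a\circ b)^\diamond=(a\circ b^\diamond)\diamond\sigma(a,b)^\diamond$; (6) $(a\circ b)^\diamond\diamond\sigma(a,b)=\sigma(a,b^\diamond)^\diamond\diamond(a\circ b^\diamond)$; (7) $\lambda(a,b^\diamond)=\lambda(a,b)^\diamond$; (8) $\lambda(a,e\diamond b)=\lambda(a,e)\diamond\lambda(a,b)$.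
   Context: An inverse semigroup is a semigroup $(A,\diamond)$ in which every $a$ has a unique $a^\diamond$ with $a\diamond a^\diamond\diamond a=a$ and $a^\diamond\diamond a\diamond a^\diamond=a^\diamond$. $E(A,\diamond)$ denotes the set of idempotents of $(A,\diamond)$. Two elements $x,y$ of an inverse semigroup satisfy the left compatibility relation $x\sim_l y$ if $x\diamond y^\diamond$ is an idempotent. A left semi-truss $(A,\diamond,\circ,\lambda)$ is a set $A$ with two associative binary operations $\diamond,\circ$ and a function $\lambda:A\times A\to A$ such that $a\circ(b\diamond c)=(a\circ b)\diamond\lambda(a,c)$ for all $a,b,c\in A$. *)

(* Defs.v *)
Set Implicit Arguments.

Definition associative {A : Type} (op : A -> A -> A) : Prop :=
  forall x y z, op x (op y z) = op (op x y) z.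

Definition is_inv {A : Type} (op : A -> A -> A) (a b : A) : Prop :=
  op (op a b) a = a /\ op (op b a) b = b.

Definition inverse_semigroup {A : Type} (op : A -> A -> A) (inv : A -> A) : Prop :=
  associative op /\
  (forall a, is_inv op a (inv a)) /\
  (forall a b, is_inv op a b -> b = inv a).

Definition idempotent {A : Type} (op : A -> A -> A) (e : A) : Prop :=
  op e e = e.

Definition left_compatible {A : Type} (op : A -> A -> A) (inv : A -> A) (x y : A) : Prop :=
  idempotent op (op x (inv y)).

Definition left_semi_truss {A : Type} (op circ : A -> A -> A) (lam : A -> A -> A) : Prop :=
  associative op /\ associative circ /\
  forall a b c, circ a (op b c) = op (circ a b) (lam a c).

Definition sigma {A : Type} (op circ : A -> A -> A) (inv : A -> A) (a b : A) : A :=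
  circ a (op b (inv b)).

(* Main.v *)
Require Import Defs.
From Stdlib Require Import Setoid.
Ltac norm Has := repeat rewrite <- Has.
Ltac normin Has H := repeat rewrite <- Has in H.
Lemma isg_basic (A : Type) (op : A -> A -> A) (inv : A -> A) :
  inverse_semigroup op inv ->
  (forall x, inv (inv x) = x) /\
  (forall e, idempotent op e -> inv e = e) /\
  (forall x z, op x (op (inv x) (op x z)) = op x z) /\
  (forall x, op x (op (inv x) x) = x) /\
  (forall e f, idempotent op e -> idempotent op f -> op e f = op f e) /\
  (forall x y, inv (op x y) = op (inv y) (inv x)) /\
  (forall x, idempotent op (op x (inv x))) /\
  (forall e f, idempotent op e -> idempotent op f -> idempotent op (op e f)).
Proof.
  intros [Has [Hi Hu]].
  assert (Hi1 : forall x, op x (op (inv x) x) = x).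
  { intro x. destruct (Hi x) as [H1 _]. rewrite Has. exact H1. }
  assert (Hi1z : forall x z, op x (op (inv x) (op x z)) = op x z).
  { intros x z. rewrite (Has (inv x)), Has, Hi1. reflexivity. }
  assert (Hii : forall x, inv (inv x) = x).
  { intro x. symmetry. apply Hu. destruct (Hi x) as [H1 H2]. split; assumption. }
  assert (Hie : forall e, idempotent op e -> inv e = e).
  { intros e He. symmetry. apply Hu. unfold idempotent in He. split; rewrite !He; reflexivity. }
  assert (Hidz : forall e z, idempotent op e -> op e (op e z) = op e z).
  { intros e z He. rewrite Has, He. reflexivity. }
  assert (Hem : forall e f, idempotent op e -> idempotent op f -> idempotent op (op e f)).
  { intros e f He Hf.
    set (x := inv (op e f)).
    assert (Hy : op f (op x e) = x).
    { apply Hu. split.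
      - norm Has. rewrite (Hidz f _ Hf). rewrite (Hidz e _ He).
        pose proof (Hi1 (op e f)) as H. fold x in H. norm Has. normin Has H. exact H.
      - destruct (Hi (op e f)) as [_ H]. fold x in H. rewrite <- H at 3.
        norm Has. rewrite (Hidz e _ He). rewrite (Hidz f _ Hf). reflexivity. }
    assert (Hx : idempotent op x).
    { assert (H0 : op (op f (op x e)) (op f (op x e)) = op f (op x e)).
      { destruct (Hi (op e f)) as [_ H]. fold x in H. normin Has H.
        assert (Hz : forall z, op x (op e (op f (op x z))) = op x z).
        { intro z. rewrite !Has. rewrite !Has in H. rewrite H. reflexivity. }
        norm Has. rewrite Hz. reflexivity. }
      rewrite Hy in H0. exact H0. }
    assert (Hx2 : op e f = inv x).
    { apply Hu. destruct (Hi (op e f)) as [H1 H2]. fold x in H1, H2. split; assumption. }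
    rewrite Hx2, (Hie x Hx). exact Hx. }
  assert (Hc : forall e f, idempotent op e -> idempotent op f -> op e f = op f e).
  { intros e f He Hf. pose proof (Hem e f He Hf) as Hef.
    rewrite <- (Hie _ Hef). symmetry. apply Hu. unfold idempotent in *. split.
    - norm Has. rewrite (Hidz f _ Hf), (Hidz e _ He). rewrite Has. exact Hef.
    - norm Has. rewrite (Hidz e _ He), (Hidz f _ Hf). rewrite Has. exact (Hem f e Hf He). }
  assert (Hxx : forall x, idempotent op (op x (inv x))).
  { intro x. unfold idempotent. rewrite Has, <- (Has x (inv x) x), Hi1. reflexivity. }
  assert (Hx'x : forall x, idempotent op (op (inv x) x)).
  { intro x. pose proof (Hxx (inv x)) as H. rewrite Hii in H. exact H. }
  repeat split; try assumption.
  assert (Hc4 : forall a b c d z, idempotent op (op a b) -> idempotent op (op c d) ->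
     op a (op b (op c (op d z))) = op c (op d (op a (op b z)))).
  { intros a b c d z H1 H2. rewrite (Has c d z), (Has a b), Has, (Hc _ _ H1 H2). norm Has. reflexivity. }
  assert (Hi1' : forall x z, op (inv x) (op x (op (inv x) z)) = op (inv x) z).
  { intros x z. pose proof (Hi1z (inv x) z) as H. rewrite Hii in H. exact H. }
  assert (Hi2 : forall x, op (inv x) (op x (inv x)) = inv x).
  { intros x. pose proof (Hi1 (inv x)) as H. rewrite Hii in H. exact H. }
  intros x y. symmetry. apply Hu. split.
  - norm Has. rewrite (Hc4 y (inv y) (inv x) x y (Hxx y) (Hx'x x)). rewrite Hi1z, Hi1. reflexivity.
  - norm Has. rewrite (Hc4 (inv x) x y (inv y) (inv x) (Hx'x x) (Hxx y)). rewrite Hi1', Hi2. reflexivity.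
Qed.

Theorem proposition3p4 (A : Type) (op circ lam : A -> A -> A) (inv : A -> A)
  (Htruss : left_semi_truss op circ lam)
  (Hinv : inverse_semigroup op inv)
  (Hlam : forall a b, lam a b = op (inv (sigma op circ inv a b)) (circ a b)) :
  forall a b c e, idempotent op e ->
    let s := sigma op circ inv in
    (* (1) *) s a (op e b) = op (op (s a e) (inv (s a b))) (s a b) /\
    (* (2) *) s a (op e b) = op (op (s a b) (inv (s a e))) (s a e) /\
    (* (3) *) (idempotent op (op (s a b) (inv (s a c))) /\
               idempotent op (op (s a c) (inv (s a b))) /\
               op (s a b) (inv (s a c)) = op (s a c) (inv (s a b))) /\
    (* (4) *) left_compatible op inv (s a b) (s a c) /\
    (* (5) *) op (s a (inv b)) (inv (circ a b)) = op (circ a (inv b)) (inv (s a b)) /\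
    (* (6) *) op (inv (circ a b)) (s a b) = op (inv (s a (inv b))) (circ a (inv b)) /\
    (* (7) *) lam a (inv b) = inv (lam a b) /\
    (* (8) *) lam a (op e b) = op (lam a e) (lam a b).
Proof.
  destruct (@isg_basic A op inv Hinv) as [Hii [Hie [Hi1z [Hi1 [Hc [Himul [Hxx Hem]]]]]]].
  destruct Htruss as [Has [_ Hdist]].
  intros a b c e He. cbv zeta. unfold sigma. unfold sigma in Hlam.
  assert (Hi1' : forall x z, op (inv x) (op x (op (inv x) z)) = op (inv x) z).
  { intros x z. pose proof (Hi1z (inv x) z) as H. rewrite Hii in H. exact H. }
  assert (Hi2 : forall x, op (inv x) (op x (inv x)) = inv x).
  { intros x. pose proof (Hi1 (inv x)) as H. rewrite Hii in H. exact H. }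
  assert (Hx'x : forall x, idempotent op (op (inv x) x)).
  { intro x. pose proof (Hxx (inv x)) as H. rewrite Hii in H. exact H. }
  assert (Hc4 : forall a b c d z, idempotent op (op a b) -> idempotent op (op c d) ->
     op a (op b (op c (op d z))) = op c (op d (op a (op b z)))).
  { intros a0 b0 c0 d z H1 H2. rewrite (Has c0 d z), (Has a0 b0), Has, (Hc _ _ H1 H2). norm Has. reflexivity. }
  set (F := circ a) in *.
  assert (HD : forall x y, F (op x y) = op (F x) (op (inv (F (op y (inv y)))) (F y))).
  { intros x y. unfold F. rewrite Hdist, Hlam. reflexivity. }
  assert (HG : forall x g, idempotent op g -> F (op x g) = op (F x) (op (inv (F g)) (F g))).
  { intros x g Hg. rewrite HD, (Hie g Hg). unfold idempotent in Hg. rewrite Hg. reflexivity. }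
  assert (Heb1 : op (op e b) (inv (op e b)) = op e (op b (inv b))).
  { rewrite Himul, (Hie e He). norm Has. rewrite (Has b (inv b) e), <- (Hc e _ He (Hxx b)).
    rewrite Has. unfold idempotent in He. rewrite He. reflexivity. }
  assert (Heb2 : op (op e b) (inv (op e b)) = op (op b (inv b)) e).
  { rewrite Heb1. apply Hc; auto. }
  assert (HFe : F (op e (inv e)) = F e).
  { rewrite (Hie e He). unfold idempotent in He. rewrite He. reflexivity. }
  assert (H1 : F (op (op e b) (inv (op e b))) = op (op (F (op e (inv e))) (inv (F (op b (inv b))))) (F (op b (inv b)))).
  { rewrite Heb1, HFe, HG by apply Hxx. rewrite Has. reflexivity. }
  assert (H3 : forall x y, idempotent op x -> idempotent op y ->
     idempotent op (op (F x) (inv (F y))) /\ op (F x) (inv (F y)) = op (F y) (inv (F x))).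
  { intros x y Hx Hy.
    assert (E : op (F x) (op (inv (F y)) (F y)) = op (F y) (op (inv (F x)) (F x))).
    { rewrite <- HG by exact Hy. rewrite <- HG by exact Hx. rewrite (Hc x y Hx Hy). reflexivity. }
    set (u := F x) in *. set (v := F y) in *.
    set (p := op u (inv v)). set (q := op v (inv u)).
    assert (Hq : q = inv p). { unfold p, q. rewrite Himul, Hii. reflexivity. }
    assert (Hp1 : p = op q p).
    { unfold p, q. transitivity (op (op u (op (inv v) v)) (inv v)).
      - norm Has. rewrite Hi2. reflexivity.
      - rewrite E. norm Has. reflexivity. }
    assert (Hpi : idempotent op p). { rewrite Hp1, Hq. apply Hx'x. }
    split. exact Hpi. fold p q. rewrite Hq, (Hie p Hpi). reflexivity. }
  assert (HSb : F (op b (inv b)) = op (F b) (op (inv (F (op (inv b) b))) (F (inv b)))).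
  { rewrite HD, Hii. reflexivity. }
  assert (HSb' : F (op (inv b) b) = op (F (inv b)) (op (inv (F (op b (inv b)))) (F b))).
  { rewrite HD. reflexivity. }
  assert (K0 : op (F b) (op (inv (F b)) (F (op b (inv b)))) = F (op b (inv b))).
  { rewrite HSb. apply Hi1z. }
  assert (K5 : inv (F (op b (inv b))) = op (inv (F (op b (inv b)))) (op (F b) (inv (F b)))).
  { rewrite <- K0 at 1. rewrite Himul, Himul, Hii. norm Has. reflexivity. }
  assert (K6 : inv (F (op (inv b) b)) = op (inv (F b)) (inv (op (F (inv b)) (inv (F (op b (inv b))))))).
  { rewrite HSb', Has, Himul. reflexivity. }
  assert (H6 : op (inv (F b)) (F (op b (inv b))) = op (inv (F (op (inv b) (inv (inv b))))) (F (inv b))).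
  { rewrite Hii. rewrite HSb at 1. rewrite K6. norm Has. rewrite Hi1'. reflexivity. }
  destruct (H3 _ _ (Hxx b) (Hxx c)) as [H3a H3b].
  split; [exact H1|].
  split; [rewrite Heb2, (HG _ e He), HFe, Has; reflexivity|].
  split; [split; [exact H3a| split; [rewrite <- H3b; exact H3a | exact H3b]]|].
  split; [exact H3a|].
  split.
  { rewrite Hii, HSb'. norm Has. rewrite <- K5. reflexivity. }
  split; [exact H6|].
  split.
  { rewrite !Hlam. fold F. rewrite Himul, !Hii. rewrite Hii in H6. symmetry. exact H6. }
  rewrite !Hlam. fold F. rewrite H1, HFe, (HD e b). rewrite Himul, Himul, Hii. norm Has.
  rewrite (Hc4 (inv (F (op b (inv b)))) (F (op b (inv b))) (inv (F e)) (F e)) by apply Hx'x.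
  rewrite Hi1'. reflexivity.
Qed.
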